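(* Let the system's knowledge connectivity graph $G_{di}$ belong to $\mathcal{G}_{di}$, and let $V_{sink}$ be the set of sink members of $G_{di}$. If every correct process executes the Discovery algorithm, then every correct process $i$ eventually (a) discovers all sink members, i.e. $V_{sink}\cap C\subseteq \mathcal{S}_{known}$ at $i$ (the paper's proof in fact shows $V_{sink}\subseteq\mathcal{S}_{known}$), and (b) receives the participant detectors of all correct sink members, i.e. $V_{sink}\cap C\subseteq \mathcal{S}_{received}$ at $i$.
   Context: System model: a finite set $\Pi$ of processes with unique IDs (no Sybil attacks), partially synchronous: for every execution there exist an unknown time GST and a bound $\delta$ such that after GST every message between correct processes is delivered within $\delta$. A static set $F\subset\Pi$ of processes is Byzantine (arbitrary behavior, may collude); $C=\Pi\setminus F$ are the correct processes, and $|F|\le f$ for a fault threshold $f$. Channels are reliable and authenticated point-to-point, and processes can use unforgeable digital signatures; $\langle m\rangle_i$ denotes $m$ signed by $i$. Each process $i$ has a participant detector $PD_i\subseteq\Pi$ (the processes it initially knows); $i$ may send a message to $j$ only if $j$ is in $i$'s current set of known processes. The knowledge connectivity graph is the digraph $G_{di}=(\Pi,E_{di})$ with $(i,j)\in E_{di}$ iff $j\in PD_i$. Graph notions: a digraph is $k$-strongly connected if every ordered pair of distinct vertices is joined by $k$ internally node-disjoint directed paths; $\kappa(H)$ is the largest such $k$. A strongly connected component is a sink if no edge leaves it. A digraph belongs to $k$-OSR PD if (i) its underlying undirected graph is connected, (ii) its condensation (DAG of strongly connected components) has exactly one sink component $G_{sink}=(V_{sink},E_{sink})$, (iii) $G_{sink}$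 is $k$-strongly connected, and (iv) every vertex outside $V_{sink}$ has at least $k$ node-disjoint paths to every vertex of $V_{sink}$. The safe subgraph $G_{safe}$ is the subgraph of $G_{di}$ induced on $\Pi\setminus F$. $\mathcal{G}_{di}$ is the family of finite knowledge connectivity graphs whose safe subgraph belongs to $(f+1)$-OSR PD and whose safe sink component has at least $2f+1$ processes. The sink members of $G_{di}$ are the processes of the sink component of $G_{safe}$ together with the Byzantine processes belonging (in $G_{di}$) to the strongly connected component containing it. Discovery algorithm at process $i$: initialize $\mathcal{S}_{PD}=\{\langle i,PD_i\rangle_i\}$, $\mathcal{S}_{known}=PD_i\cup\{i\}$, $\mathcal{S}_{received}=\{i\}$. Periodically send $\langle\textsc{GetPDs}\rangle$ to every $j\in\mathcal{S}_{known}$. On receiving $\langle\textsc{GetPDs}\rangle$ from $j$, reply $\langle\textsc{SetPDs},\mathcal{S}_{PD}\rangle$. On receiving $\langle\textsc{SetPDs},pds_j\rangle$ from $j$: if $pds_j$ contains $\langle j,PD_j\rangle_j$ correctly signed by $j$, set $\mathcal{S}_{PD}\leftarrow\mathcal{S}_{PD}\cup pds_j$, add to $\mathcal{S}_{known}$ every process appearing in some signed PD in $pds_j$, and add to $\mathcal{S}_{received}$ every $k$ such that a PD signed by $k$ is in $pds_j$. *)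

(* Defs.v *)
From mathcomp Require Import all_boot.
Set Implicit Arguments. Unset Strict Implicit. Unset Printing Implicit Defensive.

Section Graph.
Variables (P : finType) (E : rel P).

Definition restr (V : {set P}) : rel P :=
  fun x y => [&& x \in V, y \in V & E x y].

Definition reach (V : {set P}) (x y : P) : bool := connect (restr V) x y.

Definition scc (V : {set P}) (x : P) : {set P} :=
  [set y in V | reach V x y && reach V y x].

Definition is_scc (V S : {set P}) : Prop := exists2 x, x \in V & S = scc V x.

Definition is_sink_scc (V S : {set P}) : Prop :=
  is_scc V S /\ (forall x y, x \in S -> y \in V -> E x y -> y \in S).

Definition weakly_connected (V : {set P}) : Prop :=
  forall x y, x \in V -> y \in V ->
    connect (fun a b => restr V a b || restr V b a) x y.

(* s is a simple directed path from u to v in the subgraph induced on V,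
   given by its full vertex list u :: ... :: v *)
Definition dipath (V : {set P}) (u v : P) (s : seq P) : bool :=
  match s with
  | x :: rest => [&& x == u, u \in V, path (restr V) u rest,
                     last u rest == v & uniq s]
  | [::] => false
  end.

Definition interior (u v : P) (s : seq P) : seq P :=
  [seq x <- s | (x != u) && (x != v)].

Definition k_disjoint_paths (V : {set P}) (u v : P) (k : nat) : Prop :=
  exists ps : seq (seq P),
    [/\ size ps = k, uniq ps, all (dipath V u v) ps &
        forall p q, p \in ps -> q \in ps -> p != q ->
          [disjoint interior u v p & interior u v q]].

Definition k_strongly_connected (V : {set P}) (k : nat) : Prop :=
  forall u v, u \in V -> v \in V -> u != v -> k_disjoint_paths V u v k.

Definition OSR (k : nat) (V : {set P}) : Prop :=
  weakly_connected V /\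
  exists S : {set P},
    [/\ is_sink_scc V S,
        (forall S', is_sink_scc V S' -> S' = S),
        k_strongly_connected S k &
        (forall u v, u \in V :\: S -> v \in S -> k_disjoint_paths V u v k)].

End Graph.

Definition kc_rel (P : finType) (PD : P -> {set P}) : rel P :=
  fun i j => j \in PD i.

(* G_di \in \mathcal{G}_di w.r.t. Byzantine set F and threshold f:
   G_safe (induced on C = ~: F) is in (f+1)-OSR PD and its sink component
   has at least 2f+1 processes. *)
Definition in_Gdi (P : finType) (PD : P -> {set P}) (F : {set P}) (f : nat)
  : Prop :=
  OSR (kc_rel PD) f.+1 (~: F) /\
  (forall S, is_sink_scc (kc_rel PD) (~: F) S -> 2 * f + 1 <= #|S|).

Definition sink_members (P : finType) (PD : P -> {set P}) (F Vs : {set P})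
  : {set P} :=
  Vs :|: [set b in F | [exists v in Vs, b \in scc (kc_rel PD) setT v]].

(* a (validly) signed participant detector <k, S>_k *)
Definition signed_pd (P : finType) := (P * {set P})%type.

Inductive msg (P : finType) :=
| GetPDs
| SetPDs of {set signed_pd P}.
Arguments GetPDs {P}.

(* local events processed by a process: a timer tick (periodic send of
   GetPDs), receipt of message m from j, or nothing *)
Inductive event (P : finType) :=
| Tick
| Recv of P & msg P
| Idle.
Arguments Tick {P}. Arguments Idle {P}.

Record lstate (P : finType) := LState {
  s_pd : {set signed_pd P};
  s_known : {set P};
  s_received : {set P} }.

Section Discovery.
Variables (P : finType) (PD : P -> {set P}).

Definition init (i : P) : lstate P :=
  LState [set (i, PD i)] (PD i :|: [set i]) [set i].

Definition appearing (pds : {set signed_pd P}) : {set P} :=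
  [set x | [exists kS in pds, (x == kS.1) || (x \in kS.2)]].

Definition signers (pds : {set signed_pd P}) : {set P} :=
  [set k | [exists S, (k, S) \in pds]].

Definition step (s : lstate P) (e : event P) : lstate P :=
  match e with
  | Recv j (SetPDs pds) =>
      if [exists S, (j, S) \in pds] then
        LState (s_pd s :|: pds) (s_known s :|: appearing pds)
               (s_received s :|: signers pds)
      else s
  | _ => s
  end.

Variable ev : nat -> P -> seq (event P).
(* ev t i = the events processed (in order) by process i during step t *)

Fixpoint state (t : nat) (i : P) : lstate P :=
  match t with
  | 0 => init i
  | t'.+1 => foldl step (state t' i) (ev t' i)
  end.

(* local state of i just before processing its n-th event of step t *)
Definition pre_state (t : nat) (i : P) (n : nat) : lstate P :=
  foldl step (state t i) (take n (ev t i)).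

Definition sends_on (s : lstate P) (e : event P) (dst : P) (m : msg P) : Prop :=
  match e with
  | Tick => m = GetPDs /\ dst \in s_known s
  | Recv j GetPDs => dst = j /\ m = SetPDs (s_pd s)
  | _ => False
  end.

Definition sent (t : nat) (src dst : P) (m : msg P) : Prop :=
  exists2 n, n < size (ev t src) &
    sends_on (pre_state t src n) (nth Idle (ev t src) n) dst m.

Definition received (t : nat) (i j : P) (m : msg P) : Prop :=
  exists2 n, n < size (ev t i) & nth Idle (ev t i) n = Recv j m.

Definition discovery_execution (F : {set P}) : Prop :=
  [/\ (* authenticated channels / no creation: a message from a correct
         sender was actually sent earlier by it *)
      (forall t i j m, i \notin F -> j \notin F -> received t i j m ->
         exists2 t0, t0 < t & sent t0 j i m),
      (* unforgeable signatures: Byzantine senders can only forward the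
         genuine PD of a correct process *)
      (forall t i j pds, i \notin F -> j \in F -> received t i j (SetPDs pds) ->
         forall k S, k \notin F -> (k, S) \in pds -> S = PD k),
      (* partial synchrony + reliable channels between correct processes *)
      (exists GST delta : nat, forall t0 i j m, i \notin F -> j \notin F ->
         sent t0 j i m ->
         exists2 t, t0 < t <= maxn t0 GST + delta & received t i j m) &
      (forall i t, i \notin F -> exists2 t', t <= t' & has (fun e => if e is Tick then true else false) (ev t' i))].

End Discovery.

(* Main.v *)
Require Import Defs.
From mathcomp Require Import all_boot.
Set Implicit Arguments. Unset Strict Implicit. Unset Printing Implicit Defensive.

Definition le_st (P : finType) (s1 s2 : lstate P) : Prop :=
  [/\ s_pd s1 \subset s_pd s2, s_known s1 \subset s_known s2 &
      s_received s1 \subset s_received s2].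

Lemma le_st_refl (P : finType) (s : lstate P) : le_st s s.
Proof. by split. Qed.

Lemma le_st_trans (P : finType) (s1 s2 s3 : lstate P) :
  le_st s1 s2 -> le_st s2 s3 -> le_st s1 s3.
Proof.
case=> a b c [d e g]; split; [exact: subset_trans a d|exact: subset_trans b e|exact: subset_trans c g].
Qed.

Lemma step_ext (P : finType) (s : lstate P) e : le_st s (step s e).
Proof.
case: e => [|j [|pds]|] /=; try exact: le_st_refl.
case: ifP => _; last exact: le_st_refl.
by split; rewrite /= subsetUl.
Qed.

Lemma foldl_ext (P : finType) (es : seq (event P)) (s : lstate P) :
  le_st s (foldl (@step _) s es).
Proof.
elim: es s => [|e es IH] s /=; first exact: le_st_refl.
exact: le_st_trans (step_ext s e) (IH _).
Qed.

Lemma state_succ (P : finType) PD ev t (i : P) :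
  le_st (state PD ev t i) (state PD ev t.+1 i).
Proof. exact: foldl_ext. Qed.

Lemma state_mono (P : finType) PD ev t t' (i : P) : t <= t' ->
  le_st (state PD ev t i) (state PD ev t' i).
Proof.
move=> /subnKC <-; elim: (t' - t) => [|d IH]; first by rewrite addn0; exact: le_st_refl.
rewrite addnS; exact: le_st_trans IH (state_succ _ _ _ _).
Qed.

Lemma effect (P : finType) PD ev t (i j : P) pds n :
  n < size (ev t i) -> nth Idle (ev t i) n = Recv j (SetPDs pds) ->
  (exists S, (j, S) \in pds) ->
  [/\ pds \subset s_pd (state PD ev t.+1 i),
      appearing pds \subset s_known (state PD ev t.+1 i) &
      signers pds \subset s_received (state PD ev t.+1 i)].
Proof.
move=> Hn Hnth [S HS].
pose s0 := foldl (@step _) (state PD ev t i) (take n (ev t i)).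
have -> : state PD ev t.+1 i =
    foldl (@step _) (step s0 (Recv j (SetPDs pds))) (drop n.+1 (ev t i)).
  change (foldl (@step _) (state PD ev t i) (ev t i) = foldl (@step _) (step s0 (Recv j (SetPDs pds))) (drop n.+1 (ev t i))).
  by rewrite -{1}(cat_take_drop n (ev t i)) foldl_cat (drop_nth Idle Hn) /= Hnth.
have Hst : step s0 (Recv j (SetPDs pds)) =
    LState (s_pd s0 :|: pds) (s_known s0 :|: appearing pds)
           (s_received s0 :|: signers pds).
  by rewrite /= ifT //; apply/existsP; exists S.
have [a b c] := foldl_ext (drop n.+1 (ev t i)) (step s0 (Recv j (SetPDs pds))).
rewrite Hst /= in a b c *; split.
- exact: subset_trans (subsetUr _ _) a.
- exact: subset_trans (subsetUr _ _) b.
- exact: subset_trans (subsetUr _ _) c.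
Qed.

Theorem theorem2 (P : finType) (PD : P -> {set P}) (F : {set P}) (f : nat)
    (Vs : {set P}) (ev : nat -> P -> seq (event P)) :
  #|F| <= f ->
  in_Gdi PD F f ->
  is_sink_scc (kc_rel PD) (~: F) Vs ->
  discovery_execution PD ev F ->
  forall i, i \notin F ->
  exists T, forall t, T <= t ->
    (sink_members PD F Vs :&: ~: F) \subset s_known (state PD ev t i) /\
    (sink_members PD F Vs :&: ~: F) \subset s_received (state PD ev t i).
Proof.
move=> _ [[_ [S [HSsink Huniq _ Hpaths]]] _] HVs [_ _ [GST [delta Hsync]] Htick] i Hi.
have key : forall j T, j \notin F -> j \in s_known (state PD ev T i) ->
  exists T', PD j \subset s_known (state PD ev T' i) /\ j \in s_received (state PD ev T' i).
  move=> j T Hj HjT.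
  have [t' HTt' Hhas] := Htick i T Hi.
  set pr := (fun e : event P => if e is Tick then true else false) in Hhas.
  set n := find pr (ev t' i).
  have Hn : n < size (ev t' i) by rewrite -has_find.
  have Hnth : nth Idle (ev t' i) n = Tick.
    have := nth_find Idle Hhas; rewrite -/n.
    by case: (nth Idle (ev t' i) n).
  have Hsent : sent PD ev t' i j GetPDs.
    exists n => //; rewrite Hnth /=; split => //.
    have [_ b _] := foldl_ext (take n (ev t' i)) (state PD ev t' i).
    have [_ b' _] := state_mono PD ev i HTt'.
    by rewrite /pre_state (subsetP b) // (subsetP b').
  have [t1 _ [n1 Hn1 Hnth1]] := Hsync _ _ _ _ Hj Hi Hsent.
  set pds := s_pd (pre_state PD ev t1 j n1).
  have Hsent2 : sent PD ev t1 j i (SetPDs pds).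
    by exists n1 => //; rewrite Hnth1.
  have [t2 _ [n2 Hn2 Hnth2]] := Hsync _ _ _ _ Hi Hj Hsent2.
  have Hjin : (j, PD j) \in pds.
    have [a _ _] := foldl_ext (take n1 (ev t1 j)) (state PD ev t1 j).
    have [a' _ _] := state_mono PD ev j (leq0n t1).
    by rewrite /pds /pre_state (subsetP a) // (subsetP a') //= set11.
  have [_ b c] := effect PD Hn2 Hnth2 (ex_intro (fun S => (j, S) \in pds) (PD j) Hjin).
  exists t2.+1; split.
    apply/subsetP=> y Hy; apply: (subsetP b); rewrite inE.
    by apply/existsP; exists (j, PD j); rewrite Hjin /= Hy orbT.
  by apply: (subsetP c); rewrite inE; apply/existsP; exists (PD j).
have prop : forall p u, path (restr (kc_rel PD) (~: F)) u p -> u \notin F ->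
  (exists T, u \in s_known (state PD ev T i)) ->
  exists T, last u p \in s_known (state PD ev T i).
  elim=> [|y p IH] u //= /andP [Hr Hp] Hu [T HT].
  move: Hr; rewrite /restr => /and3P [_ Hy Hey].
  apply: IH => //; first by rewrite -in_setC.
  have [T' [HPD _]] := key u T Hu HT.
  by exists T'; apply: (subsetP HPD).
have reachv : forall v, v \in Vs -> connect (restr (kc_rel PD) (~: F)) i v.
  move=> v Hv.
  have HSV : Vs = S by apply: Huniq.
  case: (boolP (i \in Vs)) => HiVs.
    case: HVs => [[x Hx HVsx] _].
    move: Hv HiVs; rewrite HVsx !inE => /and3P [_ Hxv _] /and3P [_ _ Hix].
    exact: connect_trans Hix Hxv.
  have [ps [Hsz _ Hall _]] : k_disjoint_paths (kc_rel PD) (~: F) i v f.+1.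
    apply: Hpaths; last by rewrite -HSV.
    by rewrite inE HSV in HiVs *; rewrite HiVs inE.
  case: ps Hsz Hall => // p ps _ /andP [Hd _].
  case: p Hd => // x rest /and5P [_ _ Hp /eqP Hl _].
  by apply/connectP; exists rest.
have ev_v : forall v, v \in Vs -> exists T,
    v \in s_known (state PD ev T i) /\ v \in s_received (state PD ev T i).
  move=> v Hv.
  have HvF : v \notin F.
    case: HVs => [[x Hx HVsx] _]; move: Hv; rewrite HVsx !inE.
    by case/andP.
  have [p Hp Hl] := connectP (reachv v Hv).
  have [T HT] : exists T, last i p \in s_known (state PD ev T i).
    apply: prop => //; exists 0; by rewrite /= !inE eqxx orbT.
  rewrite -Hl in HT.
  have [T' [_ HT']] := key v T HvF HT.
  exists (maxn T T'); split.
    by have [_ b _] := state_mono PD ev i (leq_maxl T T'); apply: (subsetP b).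
  by have [_ _ c] := state_mono PD ev i (leq_maxr T T'); apply: (subsetP c).
have fin : forall l : seq P, {subset l <= Vs} -> exists T, forall v, v \in l ->
    v \in s_known (state PD ev T i) /\ v \in s_received (state PD ev T i).
  elim=> [|v l IH] Hl; first by exists 0.
  have [T HT] : exists T, forall v, v \in l -> v \in s_known (state PD ev T i) /\ v \in s_received (state PD ev T i).
    by apply: IH => x Hx; apply: Hl; rewrite inE Hx orbT.
  have [T' [HT1 HT2]] := ev_v v (Hl v (mem_head _ _)).
  exists (maxn T T') => w; rewrite inE => /predU1P [->|Hw].
    have [_ b c] := state_mono PD ev i (leq_maxr T T').
    by rewrite (subsetP b) // (subsetP c).
  have [_ b c] := state_mono PD ev i (leq_maxl T T').
  by have [h1 h2] := HT w Hw; rewrite (subsetP b) // (subsetP c).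
have [T HT] := fin (enum Vs) (fun x Hx => ltac:(by rewrite mem_enum in Hx)).
exists T => t HTt.
have [_ b c] := state_mono PD ev i HTt.
have Hsub : sink_members PD F Vs :&: ~: F \subset Vs.
  apply/subsetP=> x; rewrite !inE => /andP [/orP [//|/andP [HxF _]]].
  by rewrite HxF.
split; apply/subsetP=> x Hx; have HxV := subsetP Hsub x Hx;
  have [h1 h2] : x \in s_known (state PD ev T i) /\ x \in s_received (state PD ev T i) by apply: HT; rewrite mem_enum.
  exact: (subsetP b).
exact: (subsetP c).
Qed.
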